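(* In the setup of the context, let $J$ be the $F$-vector space with basis $(t_x)_{x\in B}$ and bilinear multiplication $t_xt_y:=\sum_{z\in B}\gamma_{x,y,z}t_{z^\ast}$. Then: (a) $J$ is an associative $F$-algebra with identity element $1_J=\sum_{d\in\mathcal D}n_dt_d$, where $\mathcal D:=\{x\in B\mid n_x\neq0\}$; (b) the $F$-linear map $\bar\tau:J\to F$, $\bar\tau(t_x):=n_x$, is a trace form making $J$ a symmetric $F$-algebra; (c) the $F$-linear map $t_x\mapsto t_x^\ast:=t_{x^\ast}$ is an antiautomorphism of $J$, and $(t_x)_{x\in B}$ is a $\ast$-symmetric basis of $J$ with respect to $\bar\tau$, i.e. $\bar\tau(t_{x^\ast}t_y)=\delta_{xy}$... more precisely $\bar\tau(t_xt_y^\ast)=\delta_{xy}$ for all $x,y\in B$.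
   Context: Setup: $\Gamma$ totally ordered abelian group; $K$ field with surjective valuation $\nu$, valuation ring $\mathcal O$, maximal ideal $\mathfrak m$, formally real residue field $F$. $H$ finite-dimensional split semisimple symmetric $K$-algebra with trace form $\tau$, $K$-linear involutive antiautomorphism $\ast$, $\ast$-symmetric basis $B$ ($B^\ast=B$, $\tau(bc^\ast)=\delta_{bc}$). Simple modules indexed by $\Lambda$, characters $\chi_\lambda$, Schur elements $c_\lambda$ with $\tau=\sum c_\lambda^{-1}\chi_\lambda$, $a_\lambda=-\tfrac12\nu(c_\lambda)\in\Gamma$. Fix a homomorphism $\langle a_\lambda\rangle\to K^\times$, $\gamma\mapsto v^\gamma$, with $\nu(v^\gamma)=\gamma$, and put $f_\lambda:=v^{2a_\lambda}c_\lambda\in\mathcal O^\times$. For each $\lambda$ choose a balanced matrix representation $\rho_\lambda$ of type $\lambda$ (irreducible with $\nu(\rho_\lambda(b))\ge-a_\lambda$ for all $b$ in every $\ast$-symmetric basis) and set $c^\lambda(x):=v^{a_\lambda}\rho_\lambda(x)\bmod\mathfrak m$. Define $\gamma_{x,y,z}:=\sum_\lambda\sum_{\mathfrak{s,t,u}}f_\lambda^{-1}c^\lambda(x)_{\mathfrak{st}}c^\lambda(y)_{\mathfrak{tu}}c^\lambda(z)_{\mathfrak{us}}$ and $n_x:=\sum_\lambda\sum_{\mathfrak s}f_\lambda^{-1}c^\lambda(x^\ast)_{\mathfrak{ss}}$ (elements of $F$). *)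

(* Defs.v *)
From HB Require Import structures.
From mathcomp Require Import all_boot all_order all_algebra all_field.
Set Implicit Arguments. Unset Strict Implicit. Unset Printing Implicit Defensive.
Import Order.TTheory GRing.Theory Num.Theory.
Local Open Scope ring_scope.

Definition tot_ord_group (G : porderZmodType) : Prop :=
  (forall x y : G, (x <= y) || (y <= x)) /\
  (forall x y z : G, x <= y -> x + z <= y + z).

(* ---------- valuations (nu is only meaningful on K^x; nu(0) = +oo) ---------- *)
Definition surj_valuation (K : fieldType) (G : porderZmodType) (nu : K -> G) : Prop :=
  [/\ forall x y : K, x != 0 -> y != 0 -> nu (x * y) = nu x + nu y,
      forall x y : K, x != 0 -> y != 0 -> x + y != 0 ->
        (nu x <= nu (x + y)) || (nu y <= nu (x + y)) &
      forall g : G, exists2 x : K, x != 0 & nu x = g].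

(* "nu x >= g", with the convention nu 0 = +oo *)
Definition vge (K : fieldType) (G : porderZmodType) (nu : K -> G) (x : K) (g : G) : bool :=
  (x == 0) || (g <= nu x).

Definition valO (K : fieldType) (G : porderZmodType) (nu : K -> G) : {pred K} :=
  fun x => vge nu x 0.
Definition valm (K : fieldType) (G : porderZmodType) (nu : K -> G) : {pred K} :=
  fun x => (x == 0) || (0 < nu x).

(* pi : O -> F is a surjective ring morphism with kernel m, i.e. F = O/m *)
Definition residue_map (K : fieldType) (G : porderZmodType) (nu : K -> G)
    (F : fieldType) (pi : K -> F) : Prop :=
  [/\ {in valO nu &, forall x y, pi (x + y) = pi x + pi y},
      {in valO nu &, forall x y, pi (x * y) = pi x * pi y},
      pi 1 = 1,
      forall u : F, exists2 x, x \in valO nu & pi x = u &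
      {in valO nu, forall x, (pi x == 0) = (x \in valm nu)}].

Definition formally_real (F : fieldType) : Prop :=
  forall (n : nat) (s : 'I_n -> F), \sum_(i < n) s i ^+ 2 != -1.

Definition sym_trace_form (K : fieldType) (H : falgType K) (tau : H -> K) : Prop :=
  [/\ forall (a : K) (x y : H), tau (a *: x + y) = a * tau x + tau y,
      forall x y : H, tau (x * y) = tau (y * x) &
      forall x : H, (forall y : H, tau (x * y) = 0) -> x = 0].

Definition lin_invol_antiaut (K : fieldType) (H : falgType K) (st : H -> H) : Prop :=
  [/\ forall (a : K) (x y : H), st (a *: x + y) = a *: st x + st y,
      forall x y : H, st (x * y) = st y * st x &
      forall x : H, st (st x) = x].

Definition star_sym_basis (K : fieldType) (H : falgType K) (tau : H -> K)
    (st : H -> H) (I : finType) (b : I -> H) : Prop :=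
  [/\ basis_of fullv [seq b i | i <- enum I],
      forall i, exists j, b j = st (b i) &
      forall i j, tau (b i * st (b j)) = (i == j)%:R].

Definition alg_rep (K : fieldType) (H : falgType K) (n : nat) (r : H -> 'M[K]_n) : Prop :=
  [/\ forall (a : K) (x y : H), r (a *: x + y) = a *: r x + r y,
      forall x y : H, r (x * y) = r x *m r y &
      r 1 = 1%:M].

(* H is split semisimple and (rho_l)_l is a complete irredundant family of
   irreducible representations: the map h |-> (rho_l h)_l is bijective onto
   prod_l M_{d_l}(K) (Wedderburn--Artin). *)
Definition split_semisimple_reps (K : fieldType) (H : falgType K) (L : finType)
    (d : L -> nat) (rho : forall l, H -> 'M[K]_(d l)) : Prop :=
  (forall l, (0 < d l)%N) /\
  (forall M : forall l, 'M[K]_(d l), exists! h : H, forall l, rho l h = M l).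

Definition balanced (K : fieldType) (G : porderZmodType) (nu : K -> G)
    (H : falgType K) (tau : H -> K) (st : H -> H) (n : nat) (r : H -> 'M[K]_n)
    (al : G) : Prop :=
  forall (m : nat) (b' : 'I_m -> H), star_sym_basis tau st b' ->
    forall k i j, vge nu (r (b' k) i j) (- al).

Definition in_span (G : porderZmodType) (L : finType) (a : L -> G) (g : G) : Prop :=
  exists k : L -> int, g = \sum_l a l *~ k l.

Definition vpow_hom (K : fieldType) (G : porderZmodType) (nu : K -> G)
    (L : finType) (a : L -> G) (vp : G -> K) : Prop :=
  [/\ forall g h, in_span a g -> in_span a h -> vp (g + h) = vp g * vp h,
      forall g, in_span a g -> vp g != 0 &
      forall g, in_span a g -> nu (vp g) = g].

Definition cres (K : fieldType) (G : porderZmodType) (F : fieldType) (pi : K -> F)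
    (H : falgType K) (I : finType) (b : I -> H) (L : finType) (d : L -> nat)
    (rho : forall l, H -> 'M[K]_(d l)) (a : L -> G) (vp : G -> K)
    (l : L) (x : I) : 'M[F]_(d l) :=
  map_mx pi (vp (a l) *: rho l (b x)).

(* f_l := v^{2 a_l} c_l  (an element of O^x) *)
Definition fsch (K : fieldType) (G : porderZmodType) (L : finType)
    (c : L -> K) (a : L -> G) (vp : G -> K) (l : L) : K :=
  vp (a l *+ 2) * c l.

(* gamma_{x,y,z} and n_x, given the residue matrices cm and residues fr of f_l *)
Definition gammaJ (F : fieldType) (L : finType) (d : L -> nat) (I : finType)
    (cm : forall l, I -> 'M[F]_(d l)) (fr : L -> F) (x y z : I) : F :=
  \sum_l \sum_(s < d l) \sum_(t < d l) \sum_(u < d l)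
     (fr l)^-1 * cm l x s t * cm l y t u * cm l z u s.

Definition nJ (F : fieldType) (L : finType) (d : L -> nat) (I : finType)
    (cm : forall l, I -> 'M[F]_(d l)) (fr : L -> F) (sI : I -> I) (x : I) : F :=
  \sum_l \sum_(s < d l) (fr l)^-1 * cm l (sI x) s s.

Section J.
Variables (F : fieldType) (I : finType) (gm : I -> I -> I -> F) (nx : I -> F)
  (sI : I -> I).

Definition tJ (x : I) : {ffun I -> F^o} := [ffun y => (y == x)%:R].

Definition Jmul (u w : {ffun I -> F^o}) : {ffun I -> F^o} :=
  \sum_x \sum_y (u x * w y) *: \sum_z gm x y z *: tJ (sI z).

Definition Jone : {ffun I -> F^o} := \sum_(x | nx x != 0) nx x *: tJ x.

Definition Jtau (u : {ffun I -> F^o}) : F := \sum_x u x * nx x.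

Definition Jstar (u : {ffun I -> F^o}) : {ffun I -> F^o} := \sum_x u x *: tJ (sI x).
End J.

(* Main.v *)
Require Import Defs.
From HB Require Import structures.
From mathcomp Require Import all_boot all_order all_algebra all_field.
From mathcomp Require Import ring.
Set Implicit Arguments. Unset Strict Implicit. Unset Printing Implicit Defensive.
Import Order.TTheory GRing.Theory Num.Theory.
Local Open Scope ring_scope.

Lemma tr_sum (R : pzRingType) n (J : Type) (r : seq J) (P : pred J) (f : J -> 'M[R]_n) :
  \tr (\sum_(j <- r | P j) f j) = \sum_(j <- r | P j) \tr (f j).
Proof. exact: (big_morph _ (@mxtraceD _ _) (@mxtrace0 _ _)). Qed.

Lemma sumsq0 (F : fieldType) (T : finType) (g : T -> F) : formally_real F ->
  \sum_t g t ^+ 2 = 0 -> forall t, g t = 0.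
Proof.
move=> FR S t0; apply/eqP; apply/negPn/negP => gN0.
have := FR #|T| (fun i => if enum_val i == t0 then 0 else g (enum_val i) / g t0).
rewrite -(big_enum_val (fun x => (if x == t0 then 0 else g x / g t0) ^+ 2)) /=.
move: S; rewrite (bigD1 t0) //= => S.
rewrite (bigD1 t0) //= eqxx expr0n /= add0r.
rewrite (eq_bigr (fun x => g x ^+ 2 / g t0 ^+ 2)); last first.
  by move=> x /negbTE ->; rewrite expr_div_n.
rewrite -mulr_suml.
have -> : \sum_(i | i != t0) g i ^+ 2 = - g t0 ^+ 2.
  by apply/eqP; rewrite -addr_eq0 addrC S.
by rewrite mulNr mulfV ?eqxx // expf_neq0.
Qed.

Section Flev.
Variables (F : fieldType) (I L : finType) (d : L -> nat)
  (cm : forall l, I -> 'M[F]_(d l)) (fr : L -> F) (sI : I -> I).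
Hypothesis sIK : involutive sI.
Hypothesis frN0 : forall l, fr l != 0.
Hypothesis HO : forall l m (i j : 'I_(d l)) (q p : 'I_(d m)),
  \sum_x cm l x i j * cm m (sI x) q p =
  ((l == m) && (i == p :> nat) && (j == q :> nat))%:R * fr m.
Hypothesis HD : forall x y,
  \sum_l (fr l)^-1 * \tr (cm l x *m cm l (sI y)) = (x == y)%:R.

Definition Phi l (u : {ffun I -> F^o}) : 'M[F]_(d l) := \sum_x (u x : F) *: cm l x.

Lemma Phi_lin l (k : F) u w : Phi l (k *: u + w) = k *: Phi l u + Phi l w.
Proof.
rewrite /Phi scaler_sumr -big_split /=; apply: eq_bigr => x _.
by rewrite !ffunE scalerDl scalerA.
Qed.

Lemma Phi0 l : Phi l 0 = 0.
Proof. by rewrite /Phi big1 // => x _; rewrite ffunE scale0r. Qed.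

Lemma PhiD l u w : Phi l (u + w) = Phi l u + Phi l w.
Proof. by rewrite -{1}(scale1r u) Phi_lin scale1r. Qed.

Lemma PhiZ l k u : Phi l (k *: u) = k *: Phi l u.
Proof. by rewrite -[k *: u]addr0 Phi_lin Phi0 addr0. Qed.

Lemma Phi_sum l (J : Type) (r : seq J) (P : pred J) (f : J -> {ffun I -> F^o}) :
  Phi l (\sum_(j <- r | P j) f j) = \sum_(j <- r | P j) Phi l (f j).
Proof. exact: (big_morph _ (PhiD l) (Phi0 l)). Qed.

Lemma Phi_tJ l z : Phi l (tJ F z) = cm l z.
Proof.
rewrite /Phi (bigD1 z) //= big1 => [|x xz]; first by rewrite ffunE eqxx scale1r addr0.
by rewrite ffunE (negbTE xz) scale0r.
Qed.

Let gm := gammaJ cm fr.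
Let nx := nJ cm fr sI.

Lemma key l x y : \sum_z gm x y z *: cm l (sI z) = cm l x *m cm l y.
Proof.
apply/matrixP => k k'; rewrite summxE !mxE.
transitivity (\sum_m \sum_(s < d m) \sum_(t < d m) \sum_(u < d m)
  ((fr m)^-1 * cm m x s t * cm m y t u) *
  (\sum_z cm m z u s * cm l (sI z) k k')).
  symmetry.
  under eq_bigr => m _.
    under eq_bigr => s _.
      under eq_bigr => t _.
        under eq_bigr => u _ do rewrite mulr_sumr.
        rewrite exchange_big /=.
      over.
      rewrite exchange_big /=.
    over.
    rewrite exchange_big /=.
  over.
  rewrite exchange_big /=; apply: eq_bigr => z _.
  rewrite mxE /gm /gammaJ !big_distrl /=; apply: eq_bigr => m _.
  rewrite !big_distrl /=; apply: eq_bigr => s _.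
  rewrite !big_distrl /=; apply: eq_bigr => t _.
  rewrite !big_distrl /=; apply: eq_bigr => u _.
  by rewrite !mulrA.
rewrite (bigD1 l) //= [X in _ + X = _]big1 => [|m ml]; last first.
  apply: big1 => s _; apply: big1 => t _; apply: big1 => u _.
  by rewrite HO (negbTE ml) mul0r mulr0.
rewrite addr0.
rewrite (bigD1 k) //= [X in _ + X = _]big1 => [|s sk]; last first.
  apply: big1 => t _; apply: big1 => u _.
  by rewrite HO (negbTE (sk : (s != k :> nat))) andbF mul0r mulr0.
rewrite addr0; apply: eq_bigr => t _.
rewrite (bigD1 k') //= [X in _ + X = _]big1 => [|u uk]; last first.
  by rewrite HO (negbTE (uk : (u != k' :> nat))) andbF andFb mul0r mulr0.
by rewrite addr0 HO !eqxx /= mul1r mulrC !mulrA mulfV // mul1r.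
Qed.

Lemma Phi_Jmul l (u w : {ffun I -> F^o}) : Phi l (Jmul gm sI u w) = Phi l u *m Phi l w.
Proof.
rewrite /Jmul Phi_sum.
transitivity (\sum_x \sum_y ((u x : F) * w y) *: (cm l x *m cm l y)).
  apply: eq_bigr => x _; rewrite Phi_sum; apply: eq_bigr => y _.
  rewrite PhiZ Phi_sum -key; congr (_ *: _); apply: eq_bigr => z _.
  by rewrite PhiZ Phi_tJ.
rewrite /Phi mulmx_suml; apply: eq_bigr => x _; rewrite mulmx_sumr.
by apply: eq_bigr => y _; rewrite -scalemxAl -scalemxAr scalerA.
Qed.

Lemma coef (u : {ffun I -> F^o}) y : u y = \sum_l (fr l)^-1 * \tr (Phi l u *m cm l (sI y)).
Proof.
rewrite (eq_bigr (fun l => \sum_x (u x : F) * ((fr l)^-1 * \tr (cm l x *m cm l (sI y))))); last first.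
  move=> l _; rewrite /Phi mulmx_suml tr_sum mulr_sumr; apply: eq_bigr => x _.
  by rewrite -scalemxAl mxtraceZ mulrCA.
rewrite exchange_big /=; under eq_bigr do rewrite -mulr_sumr HD.
rewrite (bigD1 y) //= big1 => [|x xy]; first by rewrite eqxx mulr1 addr0.
by rewrite (negbTE xy) mulr0.
Qed.

Lemma Phi_inj (u w : {ffun I -> F^o}) : (forall l, Phi l u = Phi l w) -> u = w.
Proof. by move=> E; apply/ffunP => y; rewrite coef [RHS]coef; under eq_bigr do rewrite E. Qed.

Lemma Phi_Jone l : Phi l (Jone nx) = 1%:M.
Proof.
rewrite /Jone Phi_sum.
transitivity (\sum_x nx x *: cm l x).
  rewrite big_mkcond /=; apply: eq_bigr => x _.
  by rewrite PhiZ Phi_tJ; case: eqP => // ->; rewrite scale0r.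
apply/matrixP => k k'; rewrite summxE !mxE.
transitivity (\sum_m \sum_(s < d m) (fr m)^-1 * \sum_x cm l x k k' * cm m (sI x) s s).
  symmetry; under eq_bigr => m _.
    under eq_bigr => s _ do rewrite mulr_sumr.
    rewrite exchange_big /=.
  over.
  rewrite exchange_big /=; apply: eq_bigr => x _.
  rewrite mxE /nx /nJ big_distrl /=; apply: eq_bigr => m _.
  rewrite big_distrl /=; apply: eq_bigr => s _.
  by rewrite mulrA mulrC mulrA [cm _ _ _ _ * _]mulrC.
rewrite (bigD1 l) //= [X in _ + X = _]big1 => [|m ml]; last first.
  by rewrite eq_sym in ml; apply: big1 => s _; rewrite HO (negbTE ml) mul0r mulr0.
rewrite addr0.
under eq_bigr do rewrite HO eqxx /=.
case: (eqVneq k k') => [<-|kk].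
  rewrite (bigD1 k) //= big1 => [|s sk]; last first.
    by rewrite eq_sym in sk; rewrite (negbTE (sk : (k != s :> nat))) andbF mul0r mulr0.
  by rewrite !eqxx /= mul1r mulVf // addr0.
apply: big1 => s _; case: (eqVneq k s) => [<-|ks].
  by rewrite eq_sym in kk; rewrite eqxx (negbTE (kk : (k' != k :> nat))) andbF mul0r mulr0.
by rewrite (negbTE (ks : (k != s :> nat))) andFb mul0r mulr0.
Qed.

Lemma ffZ (k : F) (f : {ffun I -> F^o}) a : (k *: f) a = k * f a.
Proof. by rewrite ffunE. Qed.

Lemma JstarE (u : {ffun I -> F^o}) : Jstar (F:=F) sI u = [ffun y => u (sI y)].
Proof.
apply/ffunP => y; rewrite /Jstar sum_ffunE ffunE.
rewrite (bigD1 (sI y)) //= big1 => [|x xy]; first by rewrite ffZ ffunE sIK eqxx mulr1 addr0.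
by rewrite ffZ ffunE -(inv_eq sIK) eq_sym (negbTE xy) mulr0.
Qed.

Lemma Phi_Jstar l (u : {ffun I -> F^o}) : Phi l (Jstar (F:=F) sI u) = \sum_x (u x : F) *: cm l (sI x).
Proof. by rewrite /Jstar Phi_sum; apply: eq_bigr => x _; rewrite PhiZ Phi_tJ. Qed.

Hypothesis HT : forall l, exists2 P : 'M[F]_(d l), P \in unitmx &
  forall x, (cm l (sI x))^T *m P = P *m cm l x.

Lemma cmT l (P : 'M[F]_(d l)) : P \in unitmx ->
  (forall x, (cm l (sI x))^T *m P = P *m cm l x) ->
  forall x, (cm l (sI x))^T = P *m cm l x *m invmx P.
Proof. by move=> PU HP x; rewrite -HP mulmxK. Qed.

Lemma HTr l x : \tr (cm l (sI x)) = \tr (cm l x).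
Proof.
have [P PU HP] := HT l.
rewrite -mxtrace_tr (cmT PU HP) mxtrace_mulC mulmxA mulVmx // mul1mx; reflexivity.
Qed.

Lemma Jtau_Phi (u : {ffun I -> F^o}) : Jtau nx u = \sum_l (fr l)^-1 * \tr (Phi l u).
Proof.
rewrite /Jtau.
transitivity (\sum_x \sum_l (u x : F) * ((fr l)^-1 * \tr (cm l x))).
  apply: eq_bigr => x _; rewrite /nx /nJ mulr_sumr; apply: eq_bigr => l _.
  by rewrite -(HTr l x) /mxtrace; congr (_ * _); rewrite mulr_sumr.
rewrite exchange_big /=; apply: eq_bigr => l _.
rewrite /Phi tr_sum mulr_sumr; apply: eq_bigr => x _.
by rewrite mxtraceZ mulrCA.
Qed.


Lemma trD n (A B : 'M[F]_n) : (A + B)^T = A^T + B^T.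
Proof. by apply/matrixP => i j; rewrite !mxE. Qed.
Lemma tr0 n : (0 : 'M[F]_n)^T = 0.
Proof. by apply/matrixP => i j; rewrite !mxE. Qed.
Lemma trZ n k (A : 'M[F]_n) : (k *: A)^T = k *: A^T.
Proof. by apply/matrixP => i j; rewrite !mxE. Qed.

Lemma PhiJstar_tr l (P : 'M[F]_(d l)) : P \in unitmx ->
  (forall x, (cm l (sI x))^T *m P = P *m cm l x) ->
  forall u, (Phi l (Jstar (F:=F) sI u))^T = P *m Phi l u *m invmx P.
Proof.
move=> PU HP u; rewrite Phi_Jstar (big_morph _ (@trD _) (@tr0 _)) /Phi mulmx_sumr mulmx_suml.
by apply: eq_bigr => x _; rewrite trZ (cmT PU HP) -scalemxAr -scalemxAl.
Qed.

Lemma Jstar_tJ x : Jstar (F:=F) sI (tJ F x) = tJ F (sI x).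
Proof. by apply/ffunP => z; rewrite JstarE !ffunE (inv_eq sIK). Qed.

Theorem Fmain :
  ((forall u v w, Jmul gm sI (Jmul gm sI u v) w = Jmul gm sI u (Jmul gm sI v w)) /\
   (forall u, Jmul gm sI (Jone nx) u = u /\ Jmul gm sI u (Jone nx) = u)) /\
  ((forall x, Jtau nx (tJ F x) = nx x) /\
   (forall u v, Jtau nx (Jmul gm sI u v) = Jtau nx (Jmul gm sI v u)) /\
   (forall u, (forall v, Jtau nx (Jmul gm sI u v) = 0) -> u = 0)) /\
  (bijective (Jstar (F:=F) sI) /\
   (forall u v, Jstar (F:=F) sI (Jmul gm sI u v) = Jmul gm sI (Jstar (F:=F) sI v) (Jstar (F:=F) sI u)) /\
   (forall x, Jstar (F:=F) sI (tJ F x) = tJ F (sI x)) /\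
   (forall x y, Jtau nx (Jmul gm sI (tJ F x) (Jstar (F:=F) sI (tJ F y))) = (x == y)%:R)).
Proof.
split; first split.
- by move=> u v w; apply: Phi_inj => l; rewrite !Phi_Jmul mulmxA.
- by move=> u; split; apply: Phi_inj => l; rewrite Phi_Jmul Phi_Jone ?mul1mx ?mulmx1.
split.
  split; [|split].
- move=> x; rewrite /Jtau (bigD1 x) //= big1 => [|y yx]; first by rewrite ffunE eqxx mul1r addr0.
  by rewrite ffunE (negbTE yx) mul0r.
- by move=> u v; rewrite !Jtau_Phi; apply: eq_bigr => l _; rewrite !Phi_Jmul mxtrace_mulC.
- move=> u H; apply/ffunP => y; rewrite [RHS]ffunE coef.
  by have := H (tJ F (sI y)); rewrite Jtau_Phi; under eq_bigr do rewrite Phi_Jmul Phi_tJ.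
split; [|split; [|split]].
- by exists (Jstar (F:=F) sI) => u; apply/ffunP => y; rewrite !JstarE !ffunE sIK.
- move=> u v; apply: Phi_inj => l; apply: trmx_inj.
  have [P PU HP] := HT l.
  rewrite (PhiJstar_tr PU HP) !Phi_Jmul !trmx_mul !(PhiJstar_tr PU HP).
  by rewrite !mulmxA mulmxKV.
- exact: Jstar_tJ.
- move=> x y; rewrite Jstar_tJ Jtau_Phi -HD; apply: eq_bigr => l _.
  by rewrite Phi_Jmul !Phi_tJ.
Qed.

Lemma P_unit (FR : formally_real F) l : (\sum_x (cm l x)^T *m cm l x) \in unitmx.
Proof.
rewrite unitmxE unitfE; apply/negP => /det0P [v vN0 vP].
set w := fun x => v *m (cm l x)^T.
have W : forall x (i : 'I_(d l)), w x 0 i = 0.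
  have S : \sum_(p : I * 'I_(d l)) (w p.1 0 p.2) ^+ 2 = 0.
    rewrite -(pair_bigA _ (fun x i => (w x 0 i) ^+ 2)) /=.
    have : (v *m (\sum_x (cm l x)^T *m cm l x) *m v^T) 0 0 = 0.
      by rewrite vP mul0mx mxE.
    rewrite mulmx_sumr mulmx_suml summxE => E; apply: (etrans _ E); apply: eq_bigr => x _.
    rewrite mulmxA -mulmxA -[cm l x *m v^T]trmxK trmx_mul trmxK mxE.
    by apply: eq_bigr => i _; rewrite expr2 /w; congr (_ * _); rewrite [RHS]mxE.
  by move=> x i; apply: (sumsq0 FR S (x, i)).
move/eqP: vN0; apply; apply/rowP => q; rewrite mxE.
have := HO q q q q.
rewrite !eqxx /= mul1r => E.
have : \sum_(j < d l) v 0 j * (\sum_x cm l x q j * cm l (sI x) q q) = v 0 q * fr l.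
  rewrite (bigD1 q) //= [X in _ + X = _]big1 => [|j jq]; first by rewrite addr0; congr (_ * _); exact: E.
  by rewrite HO (negbTE (jq : (j != q :> nat))) andbF mul0r mulr0.
rewrite (eq_bigr (fun j => \sum_x v 0 j * cm l x q j * cm l (sI x) q q)); last first.
  by move=> j _; rewrite mulr_sumr; apply: eq_bigr => x _; rewrite mulrA.
rewrite exchange_big /= big1 => [|x _]; last first.
  rewrite -mulr_suml; have := W x q; rewrite /w mxE => Wq.
  by rewrite (eq_bigr (fun j => v 0 j * (cm l x)^T j q)) ?Wq ?mul0r // => j _; rewrite mxE.
by move/esym/eqP; rewrite mulf_eq0 (negbTE (frN0 l)) orbF => /eqP.
Qed.

End Flev.

Lemma trmxD' (R : nmodType) m n (A B : 'M[R]_(m, n)) : (A + B)^T = A^T + B^T.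
Proof. by apply/matrixP => i j; rewrite !mxE. Qed.
Lemma trmx0' (R : nmodType) m n : (0 : 'M[R]_(m, n))^T = 0.
Proof. by apply/matrixP => i j; rewrite !mxE. Qed.
Lemma trmxZ' (R : pzRingType) m n k (A : 'M[R]_(m, n)) : (k *: A)^T = k *: A^T.
Proof. by apply/matrixP => i j; rewrite !mxE. Qed.
Lemma trmx_sum' (R : nmodType) m n (J : Type) (r : seq J) (P : pred J) (f : J -> 'M[R]_(m, n)) :
  (\sum_(j <- r | P j) f j)^T = \sum_(j <- r | P j) (f j)^T.
Proof. exact: (big_morph _ (@trmxD' _ _ _) (@trmx0' _ _ _)). Qed.

Section Klev.
Variables (G : porderZmodType) (K : fieldType) (nu : K -> G)
  (F : fieldType) (pi : K -> F)
  (H : falgType K) (tau : H -> K) (st : H -> H)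
  (I : finType) (b : I -> H) (sI : I -> I)
  (L : finType) (d : L -> nat) (rho : forall l, H -> 'M[K]_(d l))
  (c : L -> K) (a : L -> G) (vp : G -> K).
Hypotheses (HG : tot_ord_group G) (Hnu : surj_valuation nu) (Hpi : residue_map nu pi)
  (FR : formally_real F)
  (Htau : sym_trace_form tau) (Hst : lin_invol_antiaut st) (Hb : star_sym_basis tau st b)
  (HsI : forall x, b (sI x) = st (b x)) (Hrho : forall l, alg_rep (rho l))
  (Hss : split_semisimple_reps rho) (Hc : forall l, c l != 0)
  (Htr : forall h, tau h = \sum_l (c l)^-1 * \tr (rho l h))
  (Hnuc : forall l, nu (c l) = - (a l *+ 2)) (Hvp : vpow_hom nu a vp)
  (Hbal : forall l, balanced nu tau st (rho l) (a l)).

Let O := valO nu.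

Lemma inO x : (x \in O) = (x == 0) || (0 <= nu x).
Proof. by []. Qed.

Lemma leD2r (x y z : G) : x <= y -> x + z <= y + z.
Proof. by case: HG => _; apply. Qed.

Lemma nuM x y : x != 0 -> y != 0 -> nu (x * y) = nu x + nu y.
Proof. by case: Hnu => M _ _; apply: M. Qed.

Lemma nu1 : nu 1 = 0.
Proof.
have := nuM (oner_neq0 K) (oner_neq0 K); rewrite mul1r => E.
by apply: (@addrI _ (nu 1)); rewrite addr0 -E.
Qed.

Lemma O0 : 0 \in O. Proof. by rewrite inO eqxx. Qed.
Lemma O1 : 1 \in O. Proof. by rewrite inO nu1 lexx orbT. Qed.

Lemma OD x y : x \in O -> y \in O -> x + y \in O.
Proof.
move=> hx hy; have [->|x0] := eqVneq x 0; first by rewrite add0r.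
have [->|y0] := eqVneq y 0; first by rewrite addr0.
rewrite inO; have [->//|xy0] := eqVneq (x+y) 0; rewrite /=.
move: hx hy; rewrite !inO (negbTE x0) (negbTE y0) /= => hx hy.
case: Hnu => _ U _; case/orP: (U x y x0 y0 xy0) => h.
  exact: le_trans hx h.
exact: le_trans hy h.
Qed.

Lemma OM x y : x \in O -> y \in O -> x * y \in O.
Proof.
rewrite !inO; case: (eqVneq x 0) => [->|x0]; first by rewrite mul0r eqxx.
case: (eqVneq y 0) => [->|y0]; first by rewrite mulr0 eqxx.
rewrite /= nuM // => hx hy; apply/orP; right.
apply: le_trans hy _; rewrite -{1}[nu y]add0r; exact: leD2r.
Qed.

Lemma piD x y : x \in O -> y \in O -> pi (x + y) = pi x + pi y.
Proof. by case: Hpi => D _ _ _ _; apply: D. Qed.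
Lemma piM x y : x \in O -> y \in O -> pi (x * y) = pi x * pi y.
Proof. by case: Hpi => _ M _ _ _; apply: M. Qed.
Lemma pi1 : pi 1 = 1. Proof. by case: Hpi. Qed.
Lemma pi0 : pi 0 = 0.
Proof.
have := piD O0 O0; rewrite addr0 => E.
by apply: (@addrI _ (pi 0)); rewrite addr0 -E.
Qed.

Lemma pi_sum (J : finType) (P : pred J) (f : J -> K) :
  (forall j, P j -> f j \in O) ->
  (\sum_(j | P j) f j \in O) /\ pi (\sum_(j | P j) f j) = \sum_(j | P j) pi (f j).
Proof.
move=> Hf; elim/big_rec2: _ => [|j x y Pj [xO <-]]; first by rewrite O0 pi0.
by split; [apply: OD; [apply: Hf|] | rewrite piD //; apply: Hf].
Qed.

Definition Omx m n (A : 'M[K]_(m, n)) := forall i j, A i j \in O.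

Lemma Omx_mul m n p (A : 'M[K]_(m, n)) (B : 'M[K]_(n, p)) : Omx A -> Omx B ->
  Omx (A *m B) /\ map_mx pi (A *m B) = map_mx pi A *m map_mx pi B.
Proof.
move=> hA hB.
have E i j : (\sum_k A i k * B k j \in O) /\ pi (\sum_k A i k * B k j) = \sum_k pi (A i k * B k j).
  by apply: pi_sum => k _; apply: OM.
split; first by move=> i j; rewrite mxE; case: (E i j).
apply/matrixP => i j; rewrite !mxE; case: (E i j) => _ ->.
by apply: eq_bigr => k _; rewrite piM // !mxE.
Qed.

Lemma Omx_sum m n (J : finType) (f : J -> 'M[K]_(m, n)) : (forall j, Omx (f j)) ->
  Omx (\sum_j f j) /\ map_mx pi (\sum_j f j) = \sum_j map_mx pi (f j).
Proof.
move=> hf; have E i k := @pi_sum _ predT (fun j => f j i k) (fun j _ => hf j i k).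
split; first by move=> i k; rewrite summxE; case: (E i k).
apply/matrixP => i k; rewrite mxE !summxE; case: (E i k) => _ ->.
by apply: eq_bigr => j _; rewrite mxE.
Qed.

Lemma Omx_tr m n (A : 'M[K]_(m, n)) : Omx A -> Omx A^T.
Proof. by move=> hA i j; rewrite mxE. Qed.


Lemma tau0 : tau 0 = 0.
Proof.
case: Htau => T _ _; have := T 1 0 0; rewrite scale1r addr0 mul1r => E.
by apply: (@addrI _ (tau 0)); rewrite addr0 -E.
Qed.
Lemma tauD x y : tau (x + y) = tau x + tau y.
Proof. by case: Htau => T _ _; rewrite -{1}(scale1r x) T mul1r. Qed.
Lemma tauZ k x : tau (k *: x) = k * tau x.
Proof. by case: Htau => T _ _; rewrite -(addr0 (k *: x)) T tau0 addr0. Qed.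
Lemma tau_sum (J : Type) (r : seq J) (P : pred J) (f : J -> H) :
  tau (\sum_(j <- r | P j) f j) = \sum_(j <- r | P j) tau (f j).
Proof. exact: (big_morph _ tauD tau0). Qed.
Lemma tauC x y : tau (x * y) = tau (y * x).
Proof. by case: Htau. Qed.

Lemma st0 : st 0 = 0.
Proof.
case: Hst => T _ _; have := T 1 0 0; rewrite scale1r addr0 scale1r => E.
by apply: (@addrI _ (st 0)); rewrite addr0 -E.
Qed.
Lemma stD x y : st (x + y) = st x + st y.
Proof. by case: Hst => T _ _; rewrite -{1}(scale1r x) T scale1r. Qed.
Lemma stZ k x : st (k *: x) = k *: st x.
Proof. by case: Hst => T _ _; rewrite -(addr0 (k *: x)) T st0 addr0. Qed.
Lemma st_sum (J : Type) (r : seq J) (P : pred J) (f : J -> H) :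
  st (\sum_(j <- r | P j) f j) = \sum_(j <- r | P j) st (f j).
Proof. exact: (big_morph _ stD st0). Qed.
Lemma stM x y : st (x * y) = st y * st x.
Proof. by case: Hst. Qed.
Lemma stK x : st (st x) = x.
Proof. by case: Hst. Qed.

Lemma rho0 l : rho l 0 = 0.
Proof.
case: (Hrho l) => T _ _; have := T 1 0 0; rewrite scale1r addr0 scale1r => E.
by apply: (@addrI _ (rho l 0)); rewrite addr0 -E.
Qed.
Lemma rhoD l x y : rho l (x + y) = rho l x + rho l y.
Proof. by case: (Hrho l) => T _ _; rewrite -{1}(scale1r x) T scale1r. Qed.
Lemma rhoZ l k x : rho l (k *: x) = k *: rho l x.
Proof. by case: (Hrho l) => T _ _; rewrite -(addr0 (k *: x)) T rho0 addr0. Qed.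
Lemma rho_sum l (J : Type) (r : seq J) (P : pred J) (f : J -> H) :
  rho l (\sum_(j <- r | P j) f j) = \sum_(j <- r | P j) rho l (f j).
Proof. exact: (big_morph _ (rhoD l) (rho0 l)). Qed.
Lemma rhoM l x y : rho l (x * y) = rho l x *m rho l y.
Proof. by case: (Hrho l). Qed.

Lemma tau_b x y : tau (b x * st (b y)) = (x == y)%:R.
Proof. by case: Hb. Qed.

Lemma b_inj : injective b.
Proof.
move=> x y E; have := tau_b x y; rewrite E tau_b eqxx.
have [//|xy] := eqVneq x y; move=> /eqP; rewrite /= mulr1n mulr0n oner_eq0 //.
Qed.

Lemma sIK : involutive sI.
Proof. by move=> x; apply: b_inj; rewrite !HsI stK. Qed.

Lemma expand_comb n (al : 'I_n -> K) (e : 'I_n -> I) :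
  let w := \sum_i al i *: b (e i) in w = \sum_y tau (w * st (b y)) *: b y.
Proof.
move=> w.
have T y : tau (w * st (b y)) = \sum_i al i * (e i == y)%:R.
  rewrite /w mulr_suml tau_sum; apply: eq_bigr => i _.
  by rewrite -scalerAl tauZ tau_b.
under eq_bigr do rewrite T scaler_suml.
rewrite exchange_big /w; apply: eq_bigr => i _.
rewrite (bigD1 (e i)) //= big1 => [|y ey]; first by rewrite eqxx mulr1 addr0.
by rewrite eq_sym (negbTE ey) mulr0 scale0r.
Qed.

Lemma expand w : w = \sum_y tau (w * st (b y)) *: b y.
Proof.
case: Hb => Bas _ _.
set s := [seq b x | x <- enum I].
have wS : w \in span s by rewrite (span_basis Bas) memvf.
have E := coord_span (X := in_tuple s) wS.
case: (pickP (fun _ : I => true)) => [x0 _|I0].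
  pose e := fun i : 'I_(size s) => nth x0 (enum I) i.
  have Ee : w = \sum_i coord (in_tuple s) i w *: b (e i).
    rewrite {1}E; apply: eq_bigr => i _; congr (_ *: _).
    by rewrite /= (nth_map x0) // -(size_map b).
  by rewrite {1 2}Ee; exact: expand_comb.
have s0 : size s = 0%N by rewrite size_map -cardE; apply: eq_card0.
rewrite big_pred0 //; rewrite E; move: (coord (in_tuple s)) => f /=.
by rewrite big1 // => i; have := ltn_ord i; rewrite {2}s0.
Qed.

Lemma expand2 w : w = \sum_y tau (w * b y) *: st (b y).
Proof.
rewrite {1}(expand w) (reindex_inj (inv_inj sIK)) /=.
by apply: eq_bigr => y _; rewrite HsI stK -HsI.
Qed.


Lemma KO l m (i j : 'I_(d l)) (q p : 'I_(d m)) :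
  \sum_x rho l (b x) i j * rho m (b (sI x)) q p =
  c m * ((l == m) && (i == p :> nat) && (j == q :> nat))%:R.
Proof.
pose M := fun l' => \matrix_(i' < d l', j' < d l')
  ((l' == m) && (i' == p :> nat) && (j' == q :> nat))%:R : 'M[K]_(d l').
case: Hss => _ /(_ M) [h [Hh _]].
have T x : tau (h * st (b x)) = (c m)^-1 * rho m (b (sI x)) q p.
  rewrite Htr (bigD1 m) //= [X in _ + X = _]big1 => [|l' lm]; last first.
    rewrite rhoM Hh (_ : M l' = 0) ?mul0mx ?mxtrace0 ?mulr0 //.
    by apply/matrixP => i' j'; rewrite !mxE (negbTE lm).
  rewrite addr0 rhoM Hh HsI; congr (_ * _).
  rewrite /mxtrace (bigD1 p) //= [X in _ + X = _]big1 => [|i' ip]; last first.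
    rewrite mxE big1 // => k _.
    by rewrite mxE eqxx (negbTE (ip : (i' != p :> nat))) /= mul0r.
  rewrite addr0 mxE (bigD1 q) //= [X in _ + X = _]big1 => [|k kq]; last first.
    by rewrite mxE !eqxx (negbTE (kq : (k != q :> nat))) /= mul0r.
  by rewrite addr0 mxE !eqxx mul1r.
have E : M l i j = \sum_x (c m)^-1 * rho m (b (sI x)) q p * rho l (b x) i j.
  rewrite -Hh {1}(expand h) rho_sum summxE; apply: eq_bigr => x _.
  by rewrite rhoZ mxE T.
transitivity (c m * M l i j); last by rewrite mxE.
rewrite E mulr_sumr; apply: eq_bigr => x _.
by rewrite !mulrA mulfV // mul1r mulrC.
Qed.

Lemma KD x y : \sum_l (c l)^-1 * \tr (rho l (b x) *m rho l (b (sI y))) = (x == y)%:R.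
Proof. by rewrite -tau_b Htr; apply: eq_bigr => l _; rewrite rhoM HsI. Qed.

Definition QK l := \sum_x (rho l (b (sI x)))^T *m rho l (b (sI x)).

Lemma KT l h : (rho l (st h))^T *m QK l = QK l *m rho l h.
Proof.
rewrite /QK mulmx_sumr mulmx_suml.
transitivity (\sum_x \sum_z tau (h * b x * st (b z)) *:
   ((rho l (b (sI z)))^T *m rho l (b (sI x)))).
  apply: eq_bigr => x _.
  rewrite mulmxA -trmx_mul -rhoM HsI -stM {1}(expand (h * b x)) st_sum rho_sum.
  rewrite trmx_sum' mulmx_suml; apply: eq_bigr => z _.
  by rewrite stZ rhoZ trmxZ' -scalemxAl HsI.
transitivity (\sum_x \sum_z tau (st (b x) * h * b z) *:
   ((rho l (b (sI x)))^T *m rho l (b (sI z)))); last first.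
  apply: eq_bigr => x _.
  rewrite -mulmxA -rhoM HsI [in RHS](expand2 (st (b x) * h)) rho_sum mulmx_sumr.
  by apply: eq_bigr => z _; rewrite rhoZ -scalemxAr -!HsI.
rewrite [RHS]exchange_big /=; apply: eq_bigr => x _; apply: eq_bigr => z _.
by rewrite tauC mulrA.
Qed.

Lemma span_a l : in_span a (a l).
Proof.
exists (fun l' => (l' == l)%:Z); rewrite (bigD1 l) //= eqxx mulr1z big1 ?addr0 //.
by move=> l' /negbTE ->; rewrite mulr0z.
Qed.

Lemma vpN0 l : vp (a l) != 0.
Proof. by case: Hvp => _ N _; apply: N; apply: span_a. Qed.
Lemma nuvp l : nu (vp (a l)) = a l.
Proof. by case: Hvp => _ _ N; apply: N; apply: span_a. Qed.
Lemma vp2 l : vp (a l *+ 2) = vp (a l) * vp (a l).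
Proof. by case: Hvp => M _ _; rewrite mulr2n M //; apply: span_a. Qed.

Definition Kc l x := vp (a l) *: rho l (b x).

Lemma OKc l x : Omx (Kc l x).
Proof.
pose b' := fun i : 'I_#|I| => b (enum_val i).
have Hb' : star_sym_basis tau st b'.
  case: Hb => Bas _ _; split.
  - have pXY : perm_eq [seq b' i | i <- enum 'I_#|I|] [seq b x | x <- enum I].
      rewrite /b' (map_comp b enum_val); apply: perm_map.
      apply: uniq_perm; first by rewrite map_inj_uniq ?enum_uniq //; exact: enum_val_inj.
        exact: enum_uniq.
      move=> z; rewrite mem_enum; apply/mapP; exists (enum_rank z).
        by rewrite mem_enum.
      by rewrite enum_rankK.
    by rewrite /basis_of (eq_span (perm_mem pXY)) (perm_free pXY).
  - by move=> i; exists (enum_rank (sI (enum_val i))); rewrite /b' enum_rankK HsI.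
  - by move=> i j; rewrite /b' tau_b (inj_eq enum_val_inj).
move=> i j; rewrite mxE.
have := Hbal Hb' (enum_rank x) i j; rewrite /b' enum_rankK /vge.
case: (eqVneq (rho l (b x) i j) 0) => [->|e0] /=; first by rewrite mulr0 O0.
move=> he; rewrite inO nuM ?vpN0 // nuvp; apply/orP; right.
by have := leD2r (a l) he; rewrite addNr addrC.
Qed.

Definition fK l := fsch c a vp l.

Lemma fKN0 l : fK l != 0.
Proof. by rewrite /fK /fsch vp2 !mulf_neq0 ?vpN0. Qed.
Lemma nufK l : nu (fK l) = 0.
Proof.
rewrite /fK /fsch vp2 nuM ?mulf_neq0 ?vpN0 // nuM ?vpN0 // nuvp Hnuc.
by rewrite -mulr2n subrr.
Qed.
Lemma OfK l : fK l \in O.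
Proof. by rewrite inO nufK lexx orbT. Qed.
Lemma OfKV l : (fK l)^-1 \in O.
Proof.
have := nuM (fKN0 l) (invr_neq0 (fKN0 l)); rewrite mulfV ?fKN0 // nu1 nufK add0r => E.
by rewrite inO -E lexx orbT.
Qed.
Lemma pifK l : pi (fK l) * pi ((fK l)^-1) = 1.
Proof. by rewrite -piM ?OfK ?OfKV // mulfV ?fKN0 // pi1. Qed.
Lemma pifKN0 l : pi (fK l) != 0.
Proof. by apply/eqP => E; have := pifK l; rewrite E mul0r => /eqP; rewrite eq_sym oner_eq0. Qed.
Lemma pifKV l : pi ((fK l)^-1) = (pi (fK l))^-1.
Proof. by apply: (mulfI (pifKN0 l)); rewrite pifK mulfV ?pifKN0. Qed.

Lemma pi_nat (bb : bool) : pi (bb%:R) = bb%:R.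
Proof. by case: bb; rewrite ?pi1 ?pi0. Qed.

Let cm := cres pi b rho a vp.
Let fr := fun l => pi (fsch c a vp l).

Lemma cmE l x i j : cm l x i j = pi (Kc l x i j).
Proof. by rewrite /cm /cres mxE. Qed.

Lemma HO_F l m (i j : 'I_(d l)) (q p : 'I_(d m)) :
  \sum_x cm l x i j * cm m (sI x) q p =
  ((l == m) && (i == p :> nat) && (j == q :> nat))%:R * fr m.
Proof.
have E : \sum_x Kc l x i j * Kc m (sI x) q p =
    ((l == m) && (i == p :> nat) && (j == q :> nat))%:R * fK m.
  transitivity (vp (a l) * vp (a m) * \sum_x rho l (b x) i j * rho m (b (sI x)) q p).
    rewrite mulr_sumr; apply: eq_bigr => x _; rewrite !mxE.
    by rewrite !mulrA; congr (_ * _); rewrite -!mulrA; congr (_ * _); rewrite mulrC.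
  rewrite KO; case: (eqVneq l m) => [lm|lm] /=; first subst m.
  by rewrite /fK /fsch vp2; ring.
  by rewrite !mulr0 mul0r.
have [_ S] := @pi_sum _ predT (fun x => Kc l x i j * Kc m (sI x) q p)
  (fun x _ => OM (@OKc l x i j) (@OKc m (sI x) q p)).
rewrite (eq_bigr (fun x => pi (Kc l x i j * Kc m (sI x) q p))); last first.
  by move=> x _; rewrite !cmE piM ?OKc.
rewrite -S E piM ?OfK //; last by case: (_ && _); rewrite ?O0 ?O1.
by rewrite pi_nat.
Qed.

Lemma trO n (A : 'M[K]_n) : Omx A -> (\tr A \in O) /\ pi (\tr A) = \tr (map_mx pi A).
Proof.
move=> hA; have [h1 h2] := @pi_sum _ predT (fun i => A i i) (fun i _ => hA i i).
by split=> //; rewrite /mxtrace h2; apply: eq_bigr => i _; rewrite mxE.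
Qed.

Lemma HD_F x y : \sum_l (fr l)^-1 * \tr (cm l x *m cm l (sI y)) = (x == y)%:R.
Proof.
have E : \sum_l (fK l)^-1 * \tr (Kc l x *m Kc l (sI y)) = (x == y)%:R.
  rewrite -KD; apply: eq_bigr => l _.
  rewrite /Kc -scalemxAl -scalemxAr scalerA mxtraceZ /fK /fsch vp2.
  have := vpN0 l; have := Hc l; move=> cN0 vN0; field; by rewrite ?cN0 ?vN0.
have O2 l := Omx_mul (@OKc l x) (@OKc l (sI y)).
have T l := trO (proj1 (O2 l)).
have [_ S] := @pi_sum _ predT (fun l => (fK l)^-1 * \tr (Kc l x *m Kc l (sI y)))
  (fun l _ => OM (OfKV l) (proj1 (T l))).
rewrite -pi_nat -E S; apply: eq_bigr => l _.
rewrite piM ?OfKV ?(proj1 (T l)) // (proj2 (T l)) (proj2 (O2 l)) pifKV.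
by [].
Qed.

Lemma HT_F l : exists2 P : 'M[F]_(d l), P \in unitmx &
  forall x, (cm l (sI x))^T *m P = P *m cm l x.
Proof.
pose QKs := \sum_x (Kc l (sI x))^T *m Kc l (sI x).
have Ot x := Omx_mul (Omx_tr (@OKc l (sI x))) (@OKc l (sI x)).
have [OQ mapQ] := Omx_sum (fun x => proj1 (Ot x)).
have EQ : map_mx pi QKs = \sum_x (cm l (sI x))^T *m cm l (sI x).
  rewrite mapQ; apply: eq_bigr => x _; rewrite (proj2 (Ot x)) map_trmx.
  by [].
exists (map_mx pi QKs).
  rewrite EQ; have := P_unit (@pifKN0) HO_F FR l.
  by rewrite (reindex_inj (inv_inj sIK)).
move=> y.
have KE : (Kc l (sI y))^T *m QKs = QKs *m Kc l y.
  have -> : QKs = (vp (a l) * vp (a l)) *: QK l.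
    rewrite /QKs /QK scaler_sumr; apply: eq_bigr => x _.
    by rewrite /Kc trmxZ' -scalemxAl -scalemxAr scalerA.
  rewrite /Kc trmxZ' -scalemxAl -!scalemxAr -scalemxAl !scalerA HsI KT.
  by rewrite mulrC.
have := congr1 (map_mx pi) KE.
rewrite (proj2 (Omx_mul (Omx_tr (@OKc l (sI y))) OQ)) (proj2 (Omx_mul OQ (@OKc l y))).
by rewrite map_trmx.
Qed.

Theorem Kmain :
  let gm := gammaJ cm fr in
  let nx := nJ cm fr sI in
  ((forall u v w, Jmul gm sI (Jmul gm sI u v) w = Jmul gm sI u (Jmul gm sI v w)) /\
   (forall u, Jmul gm sI (Jone nx) u = u /\ Jmul gm sI u (Jone nx) = u)) /\
  ((forall x, Jtau nx (tJ F x) = nx x) /\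
   (forall u v, Jtau nx (Jmul gm sI u v) = Jtau nx (Jmul gm sI v u)) /\
   (forall u, (forall v, Jtau nx (Jmul gm sI u v) = 0) -> u = 0)) /\
  (bijective (Jstar (F:=F) sI) /\
   (forall u v, Jstar (F:=F) sI (Jmul gm sI u v) = Jmul gm sI (Jstar (F:=F) sI v) (Jstar (F:=F) sI u)) /\
   (forall x, Jstar (F:=F) sI (tJ F x) = tJ F (sI x)) /\
   (forall x y, Jtau nx (Jmul gm sI (tJ F x) (Jstar (F:=F) sI (tJ F y))) = (x == y)%:R)).
Proof.
move=> gm nx.
exact: (Fmain sIK (@pifKN0) HO_F HD_F HT_F).
Qed.

End Klev.

Unset Implicit Arguments.

Theorem mainTheorem8
  (G : porderZmodType) (K : fieldType) (nu : K -> G)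
  (F : fieldType) (pi : K -> F)
  (H : falgType K) (tau : H -> K) (st : H -> H)
  (I : finType) (b : I -> H) (sI : I -> I)
  (L : finType) (d : L -> nat) (rho : forall l, H -> 'M[K]_(d l))
  (c : L -> K) (a : L -> G) (vp : G -> K) :
  tot_ord_group G ->
  surj_valuation nu ->
  residue_map nu pi ->
  formally_real F ->
  sym_trace_form tau ->
  lin_invol_antiaut st ->
  star_sym_basis tau st b ->
  (forall x, b (sI x) = st (b x)) ->
  (forall l, alg_rep (rho l)) ->
  split_semisimple_reps rho ->
  (forall l, c l != 0) ->
  (forall h, tau h = \sum_l (c l)^-1 * \tr (rho l h)) ->
  (forall l, nu (c l) = - (a l *+ 2)) ->
  vpow_hom nu a vp ->
  (forall l, balanced nu tau st (rho l) (a l)) ->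
  let cm := cres pi b rho a vp in
  let fr := fun l => pi (fsch c a vp l) in
  let gm := gammaJ cm fr in
  let nx := nJ cm fr sI in
  (* (a) *)
  ((forall u v w, Jmul gm sI (Jmul gm sI u v) w = Jmul gm sI u (Jmul gm sI v w)) /\
   (forall u, Jmul gm sI (Jone nx) u = u /\ Jmul gm sI u (Jone nx) = u)) /\
  (* (b) *)
  ((forall x, Jtau nx (tJ F x) = nx x) /\
   (forall u v, Jtau nx (Jmul gm sI u v) = Jtau nx (Jmul gm sI v u)) /\
   (forall u, (forall v, Jtau nx (Jmul gm sI u v) = 0) -> u = 0)) /\
  (* (c) *)
  (bijective (Jstar (F:=F) sI) /\
   (forall u v, Jstar (F:=F) sI (Jmul gm sI u v) = Jmul gm sI (Jstar (F:=F) sI v) (Jstar (F:=F) sI u)) /\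
   (forall x, Jstar (F:=F) sI (tJ F x) = tJ F (sI x)) /\
   (forall x y, Jtau nx (Jmul gm sI (tJ F x) (Jstar (F:=F) sI (tJ F y))) = (x == y)%:R)).
Proof.
move=> HG Hnu Hpi FR Htau Hst Hb HsI Hrho Hss Hc Htr Hnuc Hvp Hbal cm fr gm nx.
exact: (Kmain HG Hnu Hpi FR Htau Hst Hb HsI Hrho Hss Hc Htr Hnuc Hvp Hbal).
Qed.
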